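(* Let $i,j\in\{1,2\}$ and let $\varphi(x)$ be a formula of the correspondence language whose only free variable is $x$. Then $\varphi(x)$ is logically equivalent to $ST_{ij}(I,x)$ for some modal intuitionistic formula $I$ if and only if $\varphi(x)$ is invariant with respect to $(i,j)$-modal asimulations.
   Context: Correspondence language: classical first-order logic without identity over the vocabulary $\Sigma=\{R,R_\Box,R_\Diamond,P_1,P_2,\dots\}$, with $R,R_\Box,R_\Diamond$ binary and each $P_n$ unary; connectives $\bot,\to,\vee,\wedge$, quantifiers $\forall,\exists$. $\Theta$ denotes a subset of $\Sigma$ containing $R,R_\Box,R_\Diamond$; a $\Theta$-model $M=\langle U,\iota\rangle$ interprets the letters of $\Theta$. For $M_k=\langle U_k,\iota_k\rangle$ write $R_k=\iota_k(R)$, $R_{\Box k}=\iota_k(R_\Box)$, $R_{\Diamond k}=\iota_k(R_\Diamond)$. $\Sigma_\varphi=\{R,R_\Box,R_\Diamond\}\cup\{P_n:P_n\text{ occurs in }\varphi\}$. $M,a\models\varphi(x)$ means $\varphi$ holds under assignments sending $x$ to $a$; $a\models_k\varphi(x)$ abbreviates $M_k,a\models\varphi(x)$. $s\overset{\leftrightarrow}{A}t$ means $sAt$ and $tAs$. Modal intuitionistic formulas are built from letters $p_n$ and $\bot$ with $\wedge,\vee,\to,\Box,\Diamond$. For $i,j\in\{1,2\}$: $ST_{ij}(p_n,x)=P_n(x)$; $ST_{ij}(\bot,x)=\bot$; $ST_{ij}$ commutes with $\wedge,\vee$; $ST_{ij}(I\to J,x)=\forall y(R(x,y)\to(ST_{ij}(I,y)\to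 ST_{ij}(J,y)))$; $ST_{1j}(\Box I,x)=\forall y(R_\Box(x,y)\to ST_{1j}(I,y))$; $ST_{2j}(\Box I,x)=\forall y(R(x,y)\to\forall z(R_\Box(y,z)\to ST_{2j}(I,z)))$; $ST_{i1}(\Diamond I,x)=\exists y(R_\Diamond(x,y)\wedge ST_{i1}(I,y))$; $ST_{i2}(\Diamond I,x)=\forall y(R(x,y)\to\exists z(R_\Diamond(y,z)\wedge ST_{i2}(I,z)))$. Asimulation conditions, for pointed $\Theta$-models $(M_1,t),(M_2,u)$, required for all $i,j\in\{1,2\}$, $a,c,e\in U_i$, $b,d,f\in U_j$, unary $P\in\Theta$: (type) $A\subseteq(U_1\times U_2)\cup(U_2\times U_1)$; (B-type) same for $B$; (elem) $tAu$; (base) if $aAb$ and $a\models_iP(x)$ then $b\models_jP(x)$; (step) if $aAb$ and $bR_jd$ then there is $c\in U_i$ with $aR_ic$ and $c\overset{\leftrightarrow}{A}d$; (box-2) if $aAb$, $bR_jd$, $dR_{\Box j}f$ then there are $c,e\in U_i$ with $aR_ic$, $cR_{\Box i}e$, $eAf$; (box-1) if $aAb$ and $bR_{\Box j}d$ then there is $c\in U_i$ with $aR_{\Box i}c$ and $cAd$; (diam-1) if $aAb$ and $aR_{\Diamond i}c$ then there is $d\in U_j$ with $bR_{\Diamond j}d$ and $cAd$; (diam-2(1)) if $aAb$ and $bR_jd$ then there is $c\in U_i$ with $aR_ic$ and $cBd$; (diam-2(2)) if $aBb$ and $aR_{\Diamond i}c$ then there is $d\in U_j$ with $bR_{\Diamond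 j}d$ and $cAd$. A $(2,1)$-modal $\langle(M_1,t),(M_2,u)\rangle$-asimulation is a relation $A$ satisfying type, elem, base, step, box-2, diam-1; $(1,1)$-modal: $A$ satisfying type, elem, base, step, box-1, diam-1; $(2,2)$-modal: a pair $(A,B)$ satisfying type, B-type, elem, base, step, box-2, diam-2(1), diam-2(2); $(1,2)$-modal: a pair $(A,B)$ satisfying type, B-type, elem, base, step, box-1, diam-2(1), diam-2(2). $\varphi(x)$ is invariant with respect to $(i,j)$-modal asimulations iff for every $\Theta\supseteq\Sigma_\varphi$, all pointed $\Theta$-models $(M_1,t),(M_2,u)$, every $(i,j)$-modal $\langle(M_1,t),(M_2,u)\rangle$-asimulation (for $j=2$, its first component $A$ is used), and all $a\in U_1,b\in U_2$ with $aAb$: $a\models_1\varphi(x)$ implies $b\models_2\varphi(x)$. *)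

(* Defs.v *)
From Stdlib Require Import Arith.

Inductive form : Type :=
| fbot  : form
| fR    : nat -> nat -> form
| fRbox : nat -> nat -> form
| fRdia : nat -> nat -> form
| fP    : nat -> nat -> form
| fimp  : form -> form -> form
| for_  : form -> form -> form
| fand  : form -> form -> form
| fall  : nat -> form -> form
| fex   : nat -> form -> form.

Fixpoint free_in (v : nat) (phi : form) : Prop :=
  match phi with
  | fbot => False
  | fR a b | fRbox a b | fRdia a b => v = a \/ v = b
  | fP _ a => v = a
  | fimp p q | for_ p q | fand p q => free_in v p \/ free_in v q
  | fall w p | fex w p => v <> w /\ free_in v p
  end.

(* P_n occurs in phi  (Sigma_phi = {R,R_Box,R_Dia} u {P_n : occursP n phi}) *)
Fixpoint occursP (n : nat) (phi : form) : Prop :=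
  match phi with
  | fP m _ => n = m
  | fimp p q | for_ p q | fand p q => occursP n p \/ occursP n q
  | fall _ p | fex _ p => occursP n p
  | _ => False
  end.

(* Models: a universe with interpretations of all letters.  A Theta-model is
   represented by such a structure in which the letters outside Theta are
   simply ignored. *)
Record model : Type := Model {
  dom  : Type;
  rel  : dom -> dom -> Prop;
  rbox : dom -> dom -> Prop;
  rdia : dom -> dom -> Prop;
  pred : nat -> dom -> Prop
}.

Definition update {U : Type} (s : nat -> U) (v : nat) (a : U) : nat -> U :=
  fun w => if Nat.eqb w v then a else s w.

Fixpoint sat (M : model) (s : nat -> dom M) (phi : form) : Prop :=
  match phi with
  | fbot => False
  | fR a b => rel M (s a) (s b)
  | fRbox a b => rbox M (s a) (s b)
  | fRdia a b => rdia M (s a) (s b)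
  | fP n a => pred M n (s a)
  | fimp p q => sat M s p -> sat M s q
  | for_ p q => sat M s p \/ sat M s q
  | fand p q => sat M s p /\ sat M s q
  | fall v p => forall a : dom M, sat M (update s v a) p
  | fex v p => exists a : dom M, sat M (update s v a) p
  end.

Definition holds (M : model) (x : nat) (phi : form) (a : dom M) : Prop :=
  forall s : nat -> dom M, s x = a -> sat M s phi.

Definition log_equiv (phi psi : form) : Prop :=
  forall (M : model) (s : nat -> dom M), sat M s phi <-> sat M s psi.

Inductive mform : Type :=
| mvar : nat -> mform
| mbot : mform
| mand : mform -> mform -> mform
| mor  : mform -> mform -> mform
| mimp : mform -> mform -> mform
| mbox : mform -> mform
| mdia : mform -> mform.

Inductive idx : Type := one | two.

Fixpoint ST (i j : idx) (I : mform) (x : nat) : form :=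
  match I with
  | mvar n => fP n x
  | mbot => fbot
  | mand I1 I2 => fand (ST i j I1 x) (ST i j I2 x)
  | mor I1 I2 => for_ (ST i j I1 x) (ST i j I2 x)
  | mimp I1 I2 =>
      fall (S x) (fimp (fR x (S x)) (fimp (ST i j I1 (S x)) (ST i j I2 (S x))))
  | mbox I1 =>
      match i with
      | one => fall (S x) (fimp (fRbox x (S x)) (ST i j I1 (S x)))
      | two => fall (S x) (fimp (fR x (S x))
                 (fall (S (S x)) (fimp (fRbox (S x) (S (S x))) (ST i j I1 (S (S x))))))
      end
  | mdia I1 =>
      match j with
      | one => fex (S x) (fand (fRdia x (S x)) (ST i j I1 (S x)))
      | two => fall (S x) (fimp (fR x (S x))
                 (fex (S (S x)) (fand (fRdia (S x) (S (S x))) (ST i j I1 (S (S x))))))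
      end
  end.

(* Elements of U_1 and U_2 are tagged: inl a for a in U_1, inr b for b in U_2.
   A relation A on the tagged union with the (type) condition is a subset of
   (U1 x U2) u (U2 x U1). *)
Section Asim.
Variables (M1 M2 : model).
Definition carrier : Type := (dom M1 + dom M2)%type.

Definition sR (p q : carrier) : Prop :=
  match p, q with
  | inl a, inl c => rel M1 a c
  | inr b, inr d => rel M2 b d
  | _, _ => False
  end.
Definition sRbox (p q : carrier) : Prop :=
  match p, q with
  | inl a, inl c => rbox M1 a c
  | inr b, inr d => rbox M2 b d
  | _, _ => False
  end.
Definition sRdia (p q : carrier) : Prop :=
  match p, q with
  | inl a, inl c => rdia M1 a c
  | inr b, inr d => rdia M2 b d
  | _, _ => False
  end.
Definition sP (n : nat) (p : carrier) : Prop :=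
  match p with
  | inl a => pred M1 n a
  | inr b => pred M2 n b
  end.
Definition cross (p q : carrier) : Prop :=
  match p, q with
  | inl _, inr _ | inr _, inl _ => True
  | _, _ => False
  end.

Variable Theta : nat -> Prop.
Variables (t : dom M1) (u : dom M2).

Definition c_type (A : carrier -> carrier -> Prop) : Prop :=
  forall p q, A p q -> cross p q.
Definition c_elem (A : carrier -> carrier -> Prop) : Prop := A (inl t) (inr u).
Definition c_base (A : carrier -> carrier -> Prop) : Prop :=
  forall n a b, Theta n -> A a b -> sP n a -> sP n b.
Definition c_step (A : carrier -> carrier -> Prop) : Prop :=
  forall a b d, A a b -> sR b d -> exists c, sR a c /\ A c d /\ A d c.
Definition c_box2 (A : carrier -> carrier -> Prop) : Prop :=
  forall a b d f, A a b -> sR b d -> sRbox d f ->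
    exists c e, sR a c /\ sRbox c e /\ A e f.
Definition c_box1 (A : carrier -> carrier -> Prop) : Prop :=
  forall a b d, A a b -> sRbox b d -> exists c, sRbox a c /\ A c d.
Definition c_diam1 (A : carrier -> carrier -> Prop) : Prop :=
  forall a b c, A a b -> sRdia a c -> exists d, sRdia b d /\ A c d.
Definition c_diam21 (A B : carrier -> carrier -> Prop) : Prop :=
  forall a b d, A a b -> sR b d -> exists c, sR a c /\ B c d.
Definition c_diam22 (A B : carrier -> carrier -> Prop) : Prop :=
  forall a b c, B a b -> sRdia a c -> exists d, sRdia b d /\ A c d.

Definition c_box (i : idx) (A : carrier -> carrier -> Prop) : Prop :=
  match i with one => c_box1 A | two => c_box2 A end.

(* A is an (i,j)-modal asimulation (for j = 2: A is the first component of
   an (i,2)-modal asimulation (A,B)). *)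
Definition modal_asim (i j : idx) (A : carrier -> carrier -> Prop) : Prop :=
  match j with
  | one => c_type A /\ c_elem A /\ c_base A /\ c_step A /\ c_box i A /\ c_diam1 A
  | two => exists B : carrier -> carrier -> Prop,
      c_type A /\ c_type B /\ c_elem A /\ c_base A /\ c_step A /\ c_box i A
      /\ c_diam21 A B /\ c_diam22 A B
  end.
End Asim.

Arguments carrier : clear implicits.

Definition invariant (i j : idx) (x : nat) (phi : form) : Prop :=
  forall (Theta : nat -> Prop), (forall n, occursP n phi -> Theta n) ->
  forall (M1 M2 : model) (t : dom M1) (u : dom M2)
         (A : carrier M1 M2 -> carrier M1 M2 -> Prop),
    modal_asim M1 M2 Theta t u i j A ->
    forall (a : dom M1) (b : dom M2), A (inl a) (inr b) ->
      holds M1 x phi a -> holds M2 x phi b.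

(* Main.v *)
Require Import Defs.
From Stdlib Require Import Arith Lia Classical ClassicalEpsilon Cantor.

Lemma update_same {U} (s : nat -> U) v a : update s v a v = a.
Proof. unfold update. now rewrite Nat.eqb_refl. Qed.
Lemma update_other {U} (s : nat -> U) v a w : w <> v -> update s v a w = s w.
Proof. intro H. unfold update. destruct (Nat.eqb_spec w v); congruence. Qed.

Lemma sat_free M phi : forall s s' : nat -> dom M,
  (forall v, free_in v phi -> s v = s' v) -> (sat M s phi <-> sat M s' phi).
Proof.
  induction phi; intros s s' H; simpl in *;
  try (rewrite !H by auto; tauto).
  - tauto.
  - rewrite (IHphi1 s s'), (IHphi2 s s') by auto; tauto.
  - rewrite (IHphi1 s s'), (IHphi2 s s') by auto; tauto.
  - rewrite (IHphi1 s s'), (IHphi2 s s') by auto; tauto.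
  - split; intros Ha a; [rewrite <- (IHphi (update s n a)) | rewrite (IHphi (update s n a) (update s' n a))]; auto;
    intros v Hv; unfold update; destruct (Nat.eqb_spec v n); auto.
  - split; intros [a Ha]; exists a; [rewrite <- (IHphi (update s n a)) | rewrite (IHphi (update s n a) (update s' n a))]; auto;
    intros v Hv; unfold update; destruct (Nat.eqb_spec v n); auto.
Qed.

Fixpoint msat (i j : idx) (M : model) (I : mform) (w : dom M) : Prop :=
  match I with
  | mvar n => pred M n w
  | mbot => False
  | mand I1 I2 => msat i j M I1 w /\ msat i j M I2 w
  | mor I1 I2 => msat i j M I1 w \/ msat i j M I2 w
  | mimp I1 I2 => forall v, rel M w v -> msat i j M I1 v -> msat i j M I2 v
  | mbox I1 => match i with
     | one => forall v, rbox M w v -> msat i j M I1 v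
     | two => forall v, rel M w v -> forall z, rbox M v z -> msat i j M I1 z end
  | mdia I1 => match j with
     | one => exists v, rdia M w v /\ msat i j M I1 v
     | two => forall v, rel M w v -> exists z, rdia M v z /\ msat i j M I1 z end
  end.

Ltac upd := unfold update in *; repeat match goal with
  | H : context [Nat.eqb ?a ?b] |- _ => destruct (Nat.eqb_spec a b); [try lia|try lia]
  | |- context [Nat.eqb ?a ?b] => destruct (Nat.eqb_spec a b); [try lia|try lia] end.

Lemma ST_sat i j M I : forall x (s : nat -> dom M), sat M s (ST i j I x) <-> msat i j M I (s x).
Proof.
  induction I; intros x s; simpl; try tauto.
  - rewrite IHI1, IHI2; tauto.
  - rewrite IHI1, IHI2; tauto.
  - split; intros H a; specialize (H a);
    rewrite IHI1, IHI2 in *; upd; auto.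
  - destruct i; simpl; split; intros H a; specialize (H a).
    + rewrite IHI in *; upd; auto.
    + rewrite IHI in *; upd; auto.
    + intros Ha z Hz. assert (H1 := H). clear H. upd. specialize (H1 Ha z Hz).
      rewrite IHI in H1. upd. auto.
    + intros Ha z Hz. rewrite IHI. upd. auto.
  - destruct j; simpl; split.
    + intros [a Ha]; exists a. rewrite IHI in *; upd; auto.
    + intros [a Ha]; exists a. rewrite IHI in *; upd; auto.
    + intros H a Ha. upd.
      destruct (H a Ha) as [z Hz]; exists z. rewrite IHI in Hz. upd. auto.
    + intros H a Ha. upd.
      destruct (H a Ha) as [z Hz]; exists z. rewrite IHI. upd. auto.
Qed.

Record ultra (U : (nat -> Prop) -> Prop) : Prop := {
  uT : U (fun _ => True);
  uI : forall A B : nat -> Prop, U A -> U B -> U (fun n => A n /\ B n);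
  uS : forall A B : nat -> Prop, (forall n, A n -> B n) -> U A -> U B;
  u0 : ~ U (fun _ => False);
  uC : forall A : nat -> Prop, U A \/ U (fun n => ~ A n);
  ucof : forall k, U (fun n => k <= n) }.

Section UF.
Variable U : (nat -> Prop) -> Prop.
Hypothesis HU : ultra U.

Lemma U_ext (A B : nat -> Prop) : (forall n, A n <-> B n) -> (U A <-> U B).
Proof. intro H; split; apply uS; auto; firstorder. Qed.
Lemma U_and A B : U (fun n => A n /\ B n) <-> U A /\ U B.
Proof. split. intro H; split; revert H; apply uS; auto; tauto.
  intros [H1 H2]; apply uI; auto. Qed.
Lemma U_not A : U (fun n => ~ A n) <-> ~ U A.
Proof. split.
  - intros H1 H2. apply (u0 _ HU). apply (uS _ HU (fun n => A n /\ ~ A n)); [tauto|]. apply uI; auto.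
  - intro H. destruct (uC _ HU A); tauto. Qed.
Lemma U_or A B : U (fun n => A n \/ B n) <-> U A \/ U B.
Proof. split.
  - intro H. destruct (classic (U A)); auto. right. apply U_not in H0.
    apply (uS _ HU (fun n => (A n \/ B n) /\ ~ A n)); [tauto|]. apply uI; auto.
  - intros [H|H]; revert H; apply uS; auto. Qed.
Lemma U_imp A B : U (fun n => A n -> B n) <-> (U A -> U B).
Proof. split.
  - intros H1 H2. apply (uS _ HU (fun n => (A n -> B n) /\ A n)); [tauto|]. apply uI; auto.
  - intro H. destruct (classic (U A)).
    + apply (uS _ HU B); [tauto|]. auto.
    + apply U_not in H0. revert H0. apply uS; auto. tauto. Qed.
Lemma U_const (T : Prop) : U (fun _ => T) <-> T.
Proof. split.
  - intro H. destruct (classic T); auto. exfalso. apply (u0 _ HU). revert H; apply uS; auto.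
  - intro H. apply (uS _ HU (fun _ => True)); auto. apply uT; auto. Qed.
Lemma U_iff A B : U (fun n => A n <-> B n) <-> (U A <-> U B).
Proof.
  rewrite (U_ext _ (fun n => (A n -> B n) /\ (B n -> A n))) by tauto.
  rewrite U_and, !U_imp. tauto. Qed.
Lemma U_forall_le (A : nat -> nat -> Prop) K :
  (forall k, k <= K -> U (A k)) -> U (fun n => forall k, k <= K -> A k n).
Proof.
  induction K; intro H.
  - apply (uS _ HU (A 0)); [|apply H; lia]. intros n Hn k Hk. assert (k = 0) by lia. subst; auto.
  - apply (uS _ HU (fun n => A (S K) n /\ forall k, k <= K -> A k n)).
    + intros n [H1 H2] k Hk. destruct (Nat.eq_dec k (S K)); subst; auto. apply H2; lia.
    + apply uI; auto.
Qed.

Variable Ms : nat -> model.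
Definition UP : model := Model (forall n, dom (Ms n))
  (fun f g => U (fun n => rel (Ms n) (f n) (g n)))
  (fun f g => U (fun n => rbox (Ms n) (f n) (g n)))
  (fun f g => U (fun n => rdia (Ms n) (f n) (g n)))
  (fun k f => U (fun n => pred (Ms n) k (f n))).

Lemma los phi : forall s : nat -> dom UP,
  sat UP s phi <-> U (fun n => sat (Ms n) (fun v => s v n) phi).
Proof.
  induction phi; intro s; simpl; try tauto.
  - split; [tauto|]. intro H; apply (u0 _ HU); auto.
  - rewrite U_imp, IHphi1, IHphi2; tauto.
  - rewrite U_or, IHphi1, IHphi2; tauto.
  - rewrite U_and, IHphi1, IHphi2; tauto.
  - assert (E : forall a, sat UP (update s n a) phi <->
       U (fun k => sat (Ms k) (update (fun v => s v k) n (a k)) phi)).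
    { intro a. rewrite IHphi. apply U_ext. intro k. apply sat_free.
      intros v _. unfold update. destruct (Nat.eqb v n); auto. }
    split.
    + intro H. destruct (uC _ HU (fun k => forall a, sat (Ms k) (update (fun v => s v k) n a) phi)) as [|Hn]; auto.
      exfalso.
      set (f := fun k => epsilon (inhabits (s n k)) (fun a => ~ sat (Ms k) (update (fun v => s v k) n a) phi)).
      specialize (H f). rewrite E in H. apply U_not in H; auto. revert Hn. apply uS; auto.
      intros k Hk. apply not_all_ex_not in Hk. unfold f. apply epsilon_spec. auto.
    + intros H a. rewrite E. revert H. apply uS; auto.
  - assert (E : forall a, sat UP (update s n a) phi <->
       U (fun k => sat (Ms k) (update (fun v => s v k) n (a k)) phi)).
    { intro a. rewrite IHphi. apply U_ext. intro k. apply sat_free.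
      intros v _. unfold update. destruct (Nat.eqb v n); auto. }
    split.
    + intros [a Ha]. rewrite E in Ha. revert Ha. apply uS; auto. eauto.
    + intro H.
      set (f := fun k => epsilon (inhabits (s n k)) (fun a => sat (Ms k) (update (fun v => s v k) n a) phi)).
      exists f. rewrite E. revert H. apply uS; auto. intros k Hk. unfold f. apply epsilon_spec. auto.
Qed.
End UF.

Lemma mlos U (HU : ultra U) Ms i j I (w : dom (UP U Ms)) :
  msat i j (UP U Ms) I w <-> U (fun n => msat i j (Ms n) I (w n)).
Proof.
  rewrite <- (ST_sat i j (UP U Ms) I 0 (fun _ => w)).
  rewrite los by auto. apply U_ext; auto. intro n. rewrite ST_sat. tauto.
Qed.

Definition dsat i j M I (c : dom M) := exists e, rdia M c e /\ msat i j M I e.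

Lemma dlos U (HU : ultra U) Ms i j I (w : dom (UP U Ms)) :
  dsat i j (UP U Ms) I w <-> U (fun n => dsat i j (Ms n) I (w n)).
Proof.
  assert (G : forall M (c : dom M), dsat i j M I c <->
     sat M (fun _ => c) (fex 1 (fand (fRdia 0 1) (ST i j I 1)))).
  { intros M c. unfold dsat. simpl. split; intros [e He]; exists e;
    rewrite ST_sat in *; unfold update in *; simpl in *; auto. }
  rewrite G, los by auto. apply U_ext; auto. intro n. rewrite G. tauto.
Qed.

#[local] Arguments to_nat : simpl never.
#[local] Arguments of_nat : simpl never.
Fixpoint dec (f : nat) (m : nat) : mform :=
  match f with
  | 0 => mbot
  | S f' => let (t, r) := of_nat m in
    match t with
    | 0 => mvar r
    | 1 => mbot
    | 2 => let (p, q) := of_nat r in mand (dec f' p) (dec f' q)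
    | 3 => let (p, q) := of_nat r in mor (dec f' p) (dec f' q)
    | 4 => let (p, q) := of_nat r in mimp (dec f' p) (dec f' q)
    | 5 => mbox (dec f' r)
    | 6 => mdia (dec f' r)
    | _ => mbot
    end
  end.
Fixpoint depth (I : mform) : nat :=
  match I with
  | mvar _ | mbot => 1
  | mand a b | mor a b | mimp a b => S (max (depth a) (depth b))
  | mbox a | mdia a => S (depth a)
  end.
Lemma dec_surj I : exists m, forall f, depth I <= f -> dec f m = I.
Proof.
  induction I; simpl.
  - exists (to_nat (0, n)). intros [|f] Hf; [lia|]. simpl. now rewrite ?cancel_of_to.
  - exists (to_nat (1, 0)). intros [|f] Hf; [lia|]. simpl. now rewrite ?cancel_of_to.
  - destruct IHI1 as [m1 H1], IHI2 as [m2 H2]. exists (to_nat (2, to_nat (m1, m2))).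
    intros [|f] Hf; [lia|]. simpl. rewrite ?cancel_of_to. rewrite H1, H2 by lia. auto.
  - destruct IHI1 as [m1 H1], IHI2 as [m2 H2]. exists (to_nat (3, to_nat (m1, m2))).
    intros [|f] Hf; [lia|]. simpl. rewrite ?cancel_of_to. rewrite H1, H2 by lia. auto.
  - destruct IHI1 as [m1 H1], IHI2 as [m2 H2]. exists (to_nat (4, to_nat (m1, m2))).
    intros [|f] Hf; [lia|]. simpl. rewrite ?cancel_of_to. rewrite H1, H2 by lia. auto.
  - destruct IHI as [m1 H1]. exists (to_nat (5, m1)).
    intros [|f] Hf; [lia|]. simpl. rewrite ?cancel_of_to. rewrite H1 by lia. auto.
  - destruct IHI as [m1 H1]. exists (to_nat (6, m1)).
    intros [|f] Hf; [lia|]. simpl. rewrite ?cancel_of_to. rewrite H1 by lia. auto.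
Qed.
Definition enum (n : nat) : mform := let (f, m) := of_nat n in dec f m.
Lemma enum_surj I : exists k, enum k = I.
Proof.
  destruct (dec_surj I) as [m H]. exists (to_nat (depth I, m)). unfold enum.
  rewrite cancel_of_to. auto.
Qed.

#[global] Arguments enum : simpl never.
Definition mtop := mimp mbot mbot.
Definition condf (P : nat -> Prop) (d : mform) (k : nat) : mform :=
  if excluded_middle_informative (P k) then enum k else d.
Fixpoint conjUp (P : nat -> Prop) (K : nat) : mform :=
  match K with 0 => condf P mtop 0 | S K' => mand (condf P mtop K) (conjUp P K') end.
Fixpoint disjUp (P : nat -> Prop) (K : nat) : mform :=
  match K with 0 => condf P mbot 0 | S K' => mor (condf P mbot K) (disjUp P K') end.

Lemma conjUp_sat i j M P K w :
  msat i j M (conjUp P K) w <-> forall k, k <= K -> P k -> msat i j M (enum k) w.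
Proof.
  induction K; cbn [conjUp disjUp]; unfold condf.
  - destruct (excluded_middle_informative (P 0)); cbn [msat mtop]; split; intros.
    + assert (k = 0) by lia; subst; auto.
    + apply H; auto.
    + assert (k = 0) by lia; subst; contradiction.
    + contradiction.
  - destruct (excluded_middle_informative (P (S K))); cbn [msat mtop]; rewrite IHK; split; intros.
    + destruct H. destruct (Nat.eq_dec k (S K)); subst; auto. apply H2; auto; lia.
    + split; auto.
    + destruct H. destruct (Nat.eq_dec k (S K)); subst; [contradiction|]. apply H2; auto; lia.
    + split; [intros ? _ []|auto].
Qed.
Lemma disjUp_sat i j M P K w :
  msat i j M (disjUp P K) w <-> exists k, k <= K /\ P k /\ msat i j M (enum k) w.
Proof.
  induction K; cbn [conjUp disjUp]; unfold condf.
  - destruct (excluded_middle_informative (P 0)); cbn [msat mtop]; split; intros.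
    + exists 0; auto.
    + destruct H as [k [? [? ?]]]. assert (k = 0) by lia; subst; auto.
    + contradiction.
    + destruct H as [k [? [? ?]]]. assert (k = 0) by lia; subst; contradiction.
  - destruct (excluded_middle_informative (P (S K))); cbn [msat mtop]; rewrite IHK; split; intros.
    + destruct H as [H|[k [? [? ?]]]]; [exists (S K); auto|]. exists k; split; auto.
    + destruct H as [k [? [? ?]]]. destruct (Nat.eq_dec k (S K)); subst; auto.
      right. exists k; split; auto; lia.
    + destruct H as [H|[k [? [? ?]]]]; [contradiction|]. exists k; split; auto.
    + destruct H as [k [? [? ?]]]. destruct (Nat.eq_dec k (S K)); subst; [contradiction|].
      right. exists k; split; auto; lia.
Qed.

Lemma max_ex (P : nat -> Prop) n : P 0 -> exists m, m <= n /\ P m /\ forall K, K <= n -> P K -> K <= m.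
Proof.
  intro H0. induction n.
  - exists 0. split; [lia|]. split; [auto|]. intros; lia.
  - destruct IHn as [m [H1 [H2 H3]]]. destruct (classic (P (S n))).
    + exists (S n). split; [lia|]. split; [auto|]. intros; lia.
    + exists m. split; [lia|]. split; auto. intros K HK HP.
      destruct (Nat.eq_dec K (S n)); subst; [contradiction|]. apply H3; auto; lia.
Qed.

Lemma saturation U (HU : ultra U) (X : nat -> Type) (x0 : forall n, X n)
  (Q : nat -> forall n, X n -> Prop) :
  (forall K, U (fun n => exists c, forall k, k <= K -> Q k n c)) ->
  exists g : forall n, X n, forall k, U (fun n => Q k n (g n)).
Proof.
  intro H.
  set (E := fun n K => exists c, forall k, k <= K -> Q k n c).
  set (Pr := fun n c => forall K, K <= n -> E n K -> forall k, k <= K -> Q k n c).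
  assert (Ex : forall n, exists c, Pr n c).
  { intro n. destruct (classic (E n 0)) as [H0|H0].
    - destruct (max_ex (E n) n H0) as [m [Hm1 [[c Hc] Hm3]]]. exists c.
      intros K HK HE k Hk. apply Hc. specialize (Hm3 K HK HE). lia.
    - exists (x0 n). intros K HK HE. exfalso. apply H0. destruct HE as [c Hc].
      exists c. intros k Hk. apply Hc. lia. }
  exists (fun n => epsilon (inhabits (x0 n)) (Pr n)). intro k.
  apply (uS _ HU (fun n => k <= n /\ E n k)).
  - intros n [H1 H2]. apply (epsilon_spec (inhabits (x0 n)) (Pr n) (Ex n)) with k; auto.
  - apply uI; auto. apply ucof; auto. apply H.
Qed.

Definition incl i j (X Y : model) (a : dom X) (b : dom Y) :=
  forall I, msat i j X I a -> msat i j Y I b.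
Definition Bd i j (X Y : model) (a : dom X) (b : dom Y) :=
  forall I, dsat i j X I a -> dsat i j Y I b.

Section Lem.
Variable U : (nat -> Prop) -> Prop.
Hypothesis HU : ultra U.
Variable Ms : nat -> model.
Let P := UP U Ms.
Variable Q : model.

Lemma U_cimp (T : Prop) A : U (fun n => T -> A n) <-> (T -> U A).
Proof.
  destruct (classic T).
  - rewrite (U_ext U HU _ A) by tauto. tauto.
  - split; [tauto|]. intros _. apply (uS _ HU (fun _ => True)); [tauto|]. apply uT; auto.
Qed.
Lemma U_imp_c A (T : Prop) : U (fun n => A n -> T) <-> (U A -> T).
Proof. rewrite U_imp by auto. rewrite U_const by auto. tauto. Qed.
Lemma U_iff_c A (T : Prop) : U (fun n => A n <-> T) <-> (U A <-> T).
Proof. rewrite U_iff by auto. rewrite U_const by auto. tauto. Qed.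

Lemma L_step i j (p : dom P) (q d : dom Q) :
  incl i j P Q p q -> rel Q q d ->
  exists c : dom P, rel P p c /\ incl i j P Q c d /\ incl i j Q P d c.
Proof.
  intros Hpq Hqd.
  set (Pt := fun k => msat i j Q (enum k) d).
  destruct (saturation U HU (fun n => dom (Ms n)) p
     (fun k n c => rel (Ms n) (p n) c /\ (msat i j (Ms n) (enum k) c <-> Pt k))) as [g Hg].
  - intro K.
    assert (Hc : exists c : dom P, rel P p c /\ forall k, k <= K -> (msat i j P (enum k) c <-> Pt k)).
    { apply NNPP; intro Hn.
      assert (Himp : msat i j P (mimp (conjUp Pt K) (disjUp (fun k => ~ Pt k) K)) p).
      { cbn [msat]. intros v Hv H1. apply NNPP; intro H2. apply Hn. exists v. split; auto.
        intros k Hk. rewrite conjUp_sat in H1. rewrite disjUp_sat in H2. split; intro H3.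
        - apply NNPP; intro H4. apply H2; exists k; auto.
        - apply H1; auto. }
      apply Hpq in Himp. cbn [msat] in Himp. specialize (Himp d Hqd).
      rewrite conjUp_sat, disjUp_sat in Himp.
      destruct Himp as [k [_ [Hk1 Hk2]]]; auto. }
    destruct Hc as [c [Hc1 Hc2]].
    assert (H : U (fun n => rel (Ms n) (p n) (c n) /\
              forall k, k <= K -> (msat i j (Ms n) (enum k) (c n) <-> Pt k))).
    { apply uI; auto. apply U_forall_le; auto. intros k Hk. rewrite U_iff_c.
      rewrite <- (mlos U HU Ms i j (enum k) c). auto. }
    revert H; apply uS; auto. intros n [H1 H2]. exists (c n). intros k Hk; split; auto.
  - exists g. split; [|split].
    + specialize (Hg 0). revert Hg; apply uS; auto; tauto.
    + intros I HI. destruct (enum_surj I) as [k <-].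
      assert (Hg' : U (fun n => msat i j (Ms n) (enum k) (g n) <-> Pt k)) by (generalize (Hg k); apply uS; auto; tauto).
      rewrite U_iff_c, <- (mlos U HU Ms i j (enum k) g) in Hg'. apply Hg'; auto.
    + intros I HI. destruct (enum_surj I) as [k <-].
      assert (Hg' : U (fun n => msat i j (Ms n) (enum k) (g n) <-> Pt k)) by (generalize (Hg k); apply uS; auto; tauto).
      rewrite U_iff_c, <- (mlos U HU Ms i j (enum k) g) in Hg'. apply Hg'; auto.
Qed.

Lemma L_box1 j (p : dom P) (q d : dom Q) :
  incl one j P Q p q -> rbox Q q d ->
  exists c : dom P, rbox P p c /\ incl one j P Q c d.
Proof.
  intros Hpq Hqd.
  set (Pt := fun k => msat one j Q (enum k) d).
  destruct (saturation U HU (fun n => dom (Ms n)) p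
     (fun k n c => rbox (Ms n) (p n) c /\ (msat one j (Ms n) (enum k) c -> Pt k))) as [g Hg].
  - intro K.
    assert (Hc : exists c : dom P, rbox P p c /\ forall k, k <= K -> (msat one j P (enum k) c -> Pt k)).
    { apply NNPP; intro Hn.
      assert (Hb : msat one j P (mbox (disjUp (fun k => ~ Pt k) K)) p).
      { cbn [msat]. intros v Hv. apply NNPP; intro H2. apply Hn. exists v. split; auto.
        intros k Hk H3. rewrite disjUp_sat in H2. apply NNPP; intro H4. apply H2; exists k; auto. }
      apply Hpq in Hb. cbn [msat] in Hb. specialize (Hb d Hqd).
      rewrite disjUp_sat in Hb. destruct Hb as [k [_ [Hk1 Hk2]]]; auto. }
    destruct Hc as [c [Hc1 Hc2]].
    assert (H : U (fun n => rbox (Ms n) (p n) (c n) /\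
              forall k, k <= K -> (msat one j (Ms n) (enum k) (c n) -> Pt k))).
    { apply uI; auto. apply U_forall_le; auto. intros k Hk. rewrite U_imp_c.
      rewrite <- (mlos U HU Ms one j (enum k) c). auto. }
    revert H; apply uS; auto. intros n [H1 H2]. exists (c n). intros k Hk; split; auto.
  - exists g. split.
    + specialize (Hg 0). revert Hg; apply uS; auto; tauto.
    + intros I HI. destruct (enum_surj I) as [k <-].
      assert (Hg' : U (fun n => msat one j (Ms n) (enum k) (g n) -> Pt k)) by (generalize (Hg k); apply uS; auto; tauto).
      rewrite U_imp_c, <- (mlos U HU Ms one j (enum k) g) in Hg'. apply Hg'; auto.
Qed.

Lemma L_box2 j (p : dom P) (q d f : dom Q) :
  incl two j P Q p q -> rel Q q d -> rbox Q d f ->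
  exists c e : dom P, rel P p c /\ rbox P c e /\ incl two j P Q e f.
Proof.
  intros Hpq Hqd Hdf.
  set (Pt := fun k => msat two j Q (enum k) f).
  destruct (saturation U HU (fun n => (dom (Ms n) * dom (Ms n))%type) (fun n => (p n, p n))
     (fun k n ce => rel (Ms n) (p n) (fst ce) /\ rbox (Ms n) (fst ce) (snd ce) /\
        (msat two j (Ms n) (enum k) (snd ce) -> Pt k))) as [g Hg].
  - intro K.
    assert (Hc : exists c e : dom P, rel P p c /\ rbox P c e /\
                  forall k, k <= K -> (msat two j P (enum k) e -> Pt k)).
    { apply NNPP; intro Hn.
      assert (Hb : msat two j P (mbox (disjUp (fun k => ~ Pt k) K)) p).
      { cbn [msat]. intros v Hv z Hz. apply NNPP; intro H2. apply Hn. exists v, z. split; auto. split; auto.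
        intros k Hk H3. rewrite disjUp_sat in H2. apply NNPP; intro H4. apply H2; exists k; auto. }
      apply Hpq in Hb. cbn [msat] in Hb. specialize (Hb d Hqd f Hdf).
      rewrite disjUp_sat in Hb. destruct Hb as [k [_ [Hk1 Hk2]]]; auto. }
    destruct Hc as [c [e [Hc1 [Hc2 Hc3]]]].
    assert (H : U (fun n => rel (Ms n) (p n) (c n) /\ rbox (Ms n) (c n) (e n) /\
              forall k, k <= K -> (msat two j (Ms n) (enum k) (e n) -> Pt k))).
    { apply uI; auto. apply uI; auto. apply U_forall_le; auto. intros k Hk. rewrite U_imp_c.
      rewrite <- (mlos U HU Ms two j (enum k) e). auto. }
    revert H; apply uS; auto. intros n [H1 [H2 H3]]. exists (c n, e n). intros k Hk; simpl; split; auto.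
  - exists (fun n => fst (g n)), (fun n => snd (g n)). split; [|split].
    + specialize (Hg 0). revert Hg; apply uS; auto; tauto.
    + specialize (Hg 0). revert Hg; apply uS; auto; tauto.
    + intros I HI. destruct (enum_surj I) as [k <-].
      assert (Hg' : U (fun n => msat two j (Ms n) (enum k) (snd (g n)) -> Pt k)) by (generalize (Hg k); apply uS; auto; tauto).
      rewrite U_imp_c, <- (mlos U HU Ms two j (enum k) (fun n => snd (g n))) in Hg'. apply Hg'; auto.
Qed.

Lemma L_diam1 i (p : dom P) (q c : dom Q) :
  incl i one Q P q p -> rdia Q q c ->
  exists d : dom P, rdia P p d /\ incl i one Q P c d.
Proof.
  intros Hqp Hqc.
  set (Pt := fun k => msat i one Q (enum k) c).
  destruct (saturation U HU (fun n => dom (Ms n)) p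
     (fun k n d => rdia (Ms n) (p n) d /\ (Pt k -> msat i one (Ms n) (enum k) d))) as [g Hg].
  - intro K.
    assert (Hc : exists d : dom P, rdia P p d /\ forall k, k <= K -> (Pt k -> msat i one P (enum k) d)).
    { assert (Hd : msat i one Q (mdia (conjUp Pt K)) q).
      { cbn [msat]. exists c. split; auto. rewrite conjUp_sat. auto. }
      apply Hqp in Hd. cbn [msat] in Hd. destruct Hd as [d [Hd1 Hd2]].
      rewrite conjUp_sat in Hd2. exists d. split; auto. }
    destruct Hc as [d [Hc1 Hc2]].
    assert (H : U (fun n => rdia (Ms n) (p n) (d n) /\
              forall k, k <= K -> (Pt k -> msat i one (Ms n) (enum k) (d n)))).
    { apply uI; auto. apply U_forall_le; auto. intros k Hk. rewrite U_cimp.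
      rewrite <- (mlos U HU Ms i one (enum k) d). auto. }
    revert H; apply uS; auto. intros n [H1 H2]. exists (d n). intros k Hk; split; auto.
  - exists g. split.
    + specialize (Hg 0). revert Hg; apply uS; auto; tauto.
    + intros I HI. destruct (enum_surj I) as [k <-].
      assert (Hg' : U (fun n => Pt k -> msat i one (Ms n) (enum k) (g n))) by (generalize (Hg k); apply uS; auto; tauto).
      rewrite U_cimp, <- (mlos U HU Ms i one (enum k) g) in Hg'. apply Hg'; auto.
Qed.

Lemma L_d21 i (p : dom P) (q d : dom Q) :
  incl i two P Q p q -> rel Q q d ->
  exists c : dom P, rel P p c /\ Bd i two P Q c d.
Proof.
  intros Hpq Hqd.
  set (Pt := fun k => dsat i two Q (enum k) d).
  destruct (saturation U HU (fun n => dom (Ms n)) p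
     (fun k n c => rel (Ms n) (p n) c /\ (dsat i two (Ms n) (enum k) c -> Pt k))) as [g Hg].
  - intro K.
    assert (Hc : exists c : dom P, rel P p c /\ forall k, k <= K -> (dsat i two P (enum k) c -> Pt k)).
    { apply NNPP; intro Hn.
      assert (Hb : msat i two P (mdia (disjUp (fun k => ~ Pt k) K)) p).
      { cbn [msat]. intros v Hv. apply NNPP; intro H2. apply Hn. exists v. split; auto.
        intros k Hk [z [Hz1 Hz2]]. apply NNPP; intro H4. apply H2. exists z. split; auto.
        rewrite disjUp_sat. exists k; auto. }
      apply Hpq in Hb. cbn [msat] in Hb. destruct (Hb d Hqd) as [z [Hz1 Hz2]].
      rewrite disjUp_sat in Hz2. destruct Hz2 as [k [_ [Hk1 Hk2]]]. apply Hk1. exists z; auto. }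
    destruct Hc as [c [Hc1 Hc2]].
    assert (H : U (fun n => rel (Ms n) (p n) (c n) /\
              forall k, k <= K -> (dsat i two (Ms n) (enum k) (c n) -> Pt k))).
    { apply uI; auto. apply U_forall_le; auto. intros k Hk. rewrite U_imp_c.
      rewrite <- (dlos U HU Ms i two (enum k) c). auto. }
    revert H; apply uS; auto. intros n [H1 H2]. exists (c n). intros k Hk; split; auto.
  - exists g. split.
    + specialize (Hg 0). revert Hg; apply uS; auto; tauto.
    + intros I HI. destruct (enum_surj I) as [k <-].
      assert (Hg' : U (fun n => dsat i two (Ms n) (enum k) (g n) -> Pt k)) by (generalize (Hg k); apply uS; auto; tauto).
      rewrite U_imp_c, <- (dlos U HU Ms i two (enum k) g) in Hg'. apply Hg'; auto.
Qed.

Lemma L_d22 i (b : dom P) (a c : dom Q) :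
  Bd i two Q P a b -> rdia Q a c ->
  exists d : dom P, rdia P b d /\ incl i two Q P c d.
Proof.
  intros Hab Hac.
  set (Pt := fun k => msat i two Q (enum k) c).
  destruct (saturation U HU (fun n => dom (Ms n)) b
     (fun k n d => rdia (Ms n) (b n) d /\ (Pt k -> msat i two (Ms n) (enum k) d))) as [g Hg].
  - intro K.
    assert (Hc : exists d : dom P, rdia P b d /\ forall k, k <= K -> (Pt k -> msat i two P (enum k) d)).
    { assert (Hd : dsat i two Q (conjUp Pt K) a).
      { exists c. split; auto. rewrite conjUp_sat. auto. }
      apply Hab in Hd. destruct Hd as [d [Hd1 Hd2]].
      rewrite conjUp_sat in Hd2. exists d. split; auto. }
    destruct Hc as [d [Hc1 Hc2]].
    assert (H : U (fun n => rdia (Ms n) (b n) (d n) /\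
              forall k, k <= K -> (Pt k -> msat i two (Ms n) (enum k) (d n)))).
    { apply uI; auto. apply U_forall_le; auto. intros k Hk. rewrite U_cimp.
      rewrite <- (mlos U HU Ms i two (enum k) d). auto. }
    revert H; apply uS; auto. intros n [H1 H2]. exists (d n). intros k Hk; split; auto.
  - exists g. split.
    + specialize (Hg 0). revert Hg; apply uS; auto; tauto.
    + intros I HI. destruct (enum_surj I) as [k <-].
      assert (Hg' : U (fun n => Pt k -> msat i two (Ms n) (enum k) (g n))) by (generalize (Hg k); apply uS; auto; tauto).
      rewrite U_cimp, <- (mlos U HU Ms i two (enum k) g) in Hg'. apply Hg'; auto.
Qed.
End Lem.

Definition Cm (M1 M2 : model) : model :=
  Model (carrier M1 M2) (sR M1 M2) (sRbox M1 M2) (sRdia M1 M2) (sP M1 M2).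

Lemma Cm_sat i j M1 M2 I : forall p,
  msat i j (Cm M1 M2) I p <->
  match p with inl a => msat i j M1 I a | inr b => msat i j M2 I b end.
Proof.
  induction I; intros [a|a]; cbn [msat Cm rel rbox rdia pred]; try tauto;
  try (rewrite IHI1, IHI2; tauto).
  - split; intros H v Hv; [intro H1; apply (IHI2 (inl v)), H; auto; apply (IHI1 (inl v)); auto|].
    destruct v as [v|v]; simpl in Hv; [|contradiction]. intro H1.
    apply (IHI2 (inl v)). apply H; auto. apply (IHI1 (inl v)); auto.
  - split; intros H v Hv; [intro H1; apply (IHI2 (inr v)), H; auto; apply (IHI1 (inr v)); auto|].
    destruct v as [v|v]; simpl in Hv; [contradiction|]. intro H1.
    apply (IHI2 (inr v)). apply H; auto. apply (IHI1 (inr v)); auto.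
  - destruct i; split; intro H.
    + intros v Hv. apply (IHI (inl v)), (H (inl v) Hv).
    + intros [v|v] Hv; simpl in Hv; [|contradiction]. apply IHI; eauto.
    + intros v Hv z Hz. apply (IHI (inl z)). apply (H (inl v) Hv (inl z) Hz).
    + intros [v|v] Hv; simpl in Hv; [|contradiction]. intros [z|z] Hz; simpl in Hz; [|contradiction].
      apply IHI; eauto.
  - destruct i; split; intro H.
    + intros v Hv. apply (IHI (inr v)), (H (inr v) Hv).
    + intros [v|v] Hv; simpl in Hv; [contradiction|]. apply IHI; eauto.
    + intros v Hv z Hz. apply (IHI (inr z)). apply (H (inr v) Hv (inr z) Hz).
    + intros [v|v] Hv; simpl in Hv; [contradiction|]. intros [z|z] Hz; simpl in Hz; [contradiction|].
      apply IHI; eauto.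
  - destruct j; split; intro H.
    + destruct H as [[v|v] [Hv Hv2]]; simpl in Hv; [|contradiction]. exists v. split; auto. apply (IHI (inl v)); auto.
    + destruct H as [v [Hv Hv2]]. exists (inl v). split; auto. apply (IHI (inl v)); auto.
    + intros v Hv. destruct (H (inl v) Hv) as [[z|z] [Hz Hz2]]; simpl in Hz; [|contradiction].
      exists z; split; auto. apply (IHI (inl z)); auto.
    + intros [v|v] Hv; simpl in Hv; [|contradiction]. destruct (H v Hv) as [z [Hz Hz2]].
      exists (inl z); split; auto. apply (IHI (inl z)); auto.
  - destruct j; split; intro H.
    + destruct H as [[v|v] [Hv Hv2]]; simpl in Hv; [contradiction|]. exists v. split; auto. apply (IHI (inr v)); auto.
    + destruct H as [v [Hv Hv2]]. exists (inr v). split; auto. apply (IHI (inr v)); auto.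
    + intros v Hv. destruct (H (inr v) Hv) as [[z|z] [Hz Hz2]]; simpl in Hz; [contradiction|].
      exists z; split; auto. apply (IHI (inr z)); auto.
    + intros [v|v] Hv; simpl in Hv; [contradiction|]. destruct (H v Hv) as [z [Hz Hz2]].
      exists (inr z); split; auto. apply (IHI (inr z)); auto.
Qed.

Lemma transfer i j M1 M2 (A : carrier M1 M2 -> carrier M1 M2 -> Prop)
  (Hbase : forall n a b, A a b -> sP M1 M2 n a -> sP M1 M2 n b)
  (Hstep : c_step M1 M2 A) (Hbox : c_box M1 M2 i A)
  (Hdia : match j with one => c_diam1 M1 M2 A
          | two => exists B, c_diam21 M1 M2 A B /\ c_diam22 M1 M2 A B end) :
  forall I a b, A a b -> msat i j (Cm M1 M2) I a -> msat i j (Cm M1 M2) I b.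
Proof.
  induction I; intros a b Hab; cbn [msat Cm rel rbox rdia pred].
  - apply Hbase; auto.
  - auto.
  - intros [H1 H2]; split; eauto.
  - intros [H1|H2]; [left|right]; eauto.
  - intros H d Hbd Hd. destruct (Hstep a b d Hab Hbd) as [c [Hac [Hcd Hdc]]].
    apply (IHI2 c d Hcd). apply H; auto. apply (IHI1 d c Hdc); auto.
  - destruct i; simpl in Hbox.
    + intros H d Hbd. destruct (Hbox a b d Hab Hbd) as [c [Hac Hcd]]. eauto.
    + intros H d Hbd f Hdf. destruct (Hbox a b d f Hab Hbd Hdf) as [c [e [Hac [Hce Hef]]]]. eauto.
  - destruct j.
    + intros [c [Hac Hc]]. destruct (Hdia a b c Hab Hac) as [d [Hbd Hcd]]. eauto.
    + destruct Hdia as [B [H21 H22]]. intros H d Hbd.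
      destruct (H21 a b d Hab Hbd) as [c [Hac Bcd]]. destruct (H c Hac) as [e [Hce He]].
      destruct (H22 c d e Bcd Hce) as [f [Hdf Hef]]. eauto.
Qed.

Definition restr (M : model) (Th : nat -> Prop) : model :=
  Model (dom M) (rel M) (rbox M) (rdia M) (fun n w => Th n /\ pred M n w).

Lemma sat_restr M Th phi : (forall n, occursP n phi -> Th n) ->
  forall s : nat -> dom M, sat (restr M Th) s phi <-> sat M s phi.
Proof.
  induction phi; intros HT s; simpl in *; try tauto.
  - split; [tauto|]. intro; split; auto.
  - rewrite IHphi1, IHphi2 by auto; tauto.
  - rewrite IHphi1, IHphi2 by auto; tauto.
  - rewrite IHphi1, IHphi2 by auto; tauto.
  - split; intros H a; specialize (H a); rewrite IHphi in *; auto.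
  - split; intros [a H]; exists a; rewrite IHphi in *; auto.
Qed.

Lemma easy_dir i j x phi I : log_equiv phi (ST i j I x) -> invariant i j x phi.
Proof.
  intros HE Th HTh M1 M2 t u A HA a b Hab Ha s Hs.
  set (M1' := restr M1 Th). set (M2' := restr M2 Th).
  assert (H1 : msat i j M1' I a).
  { assert (Hs1 : sat M1 (fun _ => a) phi) by (apply Ha; auto).
    rewrite <- (sat_restr M1 Th phi HTh) in Hs1. apply HE in Hs1.
    rewrite ST_sat in Hs1. exact Hs1. }
  assert (H2 : msat i j M2' I b).
  { assert (Hc : msat i j (Cm M1' M2') I (inl a)) by (apply (Cm_sat i j M1' M2' I (inl a)); exact H1).
    apply (Cm_sat i j M1' M2' I (inr b)).
    assert (Hb : c_base M1 M2 Th A /\ c_step M1 M2 A /\ c_box M1 M2 i A /\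
       match j with one => c_diam1 M1 M2 A
          | two => exists B, c_diam21 M1 M2 A B /\ c_diam22 M1 M2 A B end).
    { destruct j; simpl in HA.
      + destruct HA as [_ [_ [Hb [Hst [Hbx Hd]]]]]. auto.
      + destruct HA as [B [_ [_ [_ [Hb [Hst [Hbx [H21 H22]]]]]]]]. split; auto. split; auto. split; auto.
        exists B; auto. }
    destruct Hb as [Hb [Hst [Hbx Hd]]].
    assert (Hbase : forall n p q, A p q -> sP M1' M2' n p -> sP M1' M2' n q).
    { intros n p q Hpq; destruct p as [p|p], q as [q|q]; simpl; intros [Hn Hp]; split; auto;
      [apply (Hb n (inl p) (inl q) Hn Hpq Hp) | apply (Hb n (inl p) (inr q) Hn Hpq Hp)
      | apply (Hb n (inr p) (inl q) Hn Hpq Hp) | apply (Hb n (inr p) (inr q) Hn Hpq Hp)]. }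
    exact (transfer i j M1' M2' A Hbase Hst Hbx Hd I (inl a) (inr b) Hab Hc). }
  rewrite <- (sat_restr M2 Th phi HTh). apply HE. rewrite ST_sat. rewrite Hs. exact H2.
Qed.

Lemma choice_model (Pm : nat -> forall M : model, (nat -> dom M) -> Prop) :
  (forall n, exists M s, Pm n M s) ->
  exists (Ms : nat -> model) (ss : forall n, nat -> dom (Ms n)), forall n, Pm n (Ms n) (ss n).
Proof.
  intro H.
  exists (fun n => proj1_sig (constructive_indefinite_description _ (H n))).
  exists (fun n => proj1_sig (constructive_indefinite_description _
             (proj2_sig (constructive_indefinite_description _ (H n))))).
  intro n. exact (proj2_sig (constructive_indefinite_description _
             (proj2_sig (constructive_indefinite_description _ (H n))))).
Qed.

Section Asim.
Variable U : (nat -> Prop) -> Prop.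
Hypothesis HU : ultra U.
Variables Ns Ms : nat -> model.
Let N := UP U Ns.
Let M := UP U Ms.
Variables i j : idx.

Definition Arel (p q : carrier N M) : Prop :=
  match p, q with
  | inl a, inr b => incl i j N M a b
  | inr b, inl a => incl i j M N b a
  | _, _ => False end.
Definition Brel (p q : carrier N M) : Prop :=
  match p, q with
  | inl a, inr b => Bd i j N M a b
  | inr b, inl a => Bd i j M N b a
  | _, _ => False end.

End Asim.

Lemma Arel_asim U (HU : ultra U) Ns Ms i j Th (b : dom (UP U Ns)) (a : dom (UP U Ms)) :
  incl i j (UP U Ns) (UP U Ms) b a ->
  modal_asim (UP U Ns) (UP U Ms) Th b a i j (Arel U Ns Ms i j).
Proof.
  set (N := UP U Ns). set (M := UP U Ms).
  intro Hba.
  assert (Ht : c_type N M (Arel U Ns Ms i j)) by (intros [p|p] [q|q]; simpl; tauto).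
  assert (He : c_elem N M b a (Arel U Ns Ms i j)) by exact Hba.
  assert (Hb : c_base N M Th (Arel U Ns Ms i j)).
  { intros n [p|p] [q|q] _ H; simpl in *; try tauto; intro Hp; apply (H (mvar n)); exact Hp. }
  assert (Hs : c_step N M (Arel U Ns Ms i j)).
  { intros [p|p] [q|q] [d|d] H Hr; simpl in *; try tauto.
    - destruct (L_step U HU Ns M i j p q d H Hr) as [c [H1 [H2 H3]]]. exists (inl c). simpl; auto.
    - destruct (L_step U HU Ms N i j p q d H Hr) as [c [H1 [H2 H3]]]. exists (inr c). simpl; auto. }
  assert (Hbx : c_box N M i (Arel U Ns Ms i j)).
  { destruct i; simpl.
    - intros [p|p] [q|q] [d|d] H Hr; simpl in *; try tauto.
      + destruct (L_box1 U HU Ns M j p q d H Hr) as [c [H1 H2]]. exists (inl c). simpl; auto.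
      + destruct (L_box1 U HU Ms N j p q d H Hr) as [c [H1 H2]]. exists (inr c). simpl; auto.
    - intros [p|p] [q|q] [d|d] [f|f] H Hr Hr2; simpl in *; try tauto.
      + destruct (L_box2 U HU Ns M j p q d f H Hr Hr2) as [c [e [H1 [H2 H3]]]]. exists (inl c), (inl e). simpl; auto.
      + destruct (L_box2 U HU Ms N j p q d f H Hr Hr2) as [c [e [H1 [H2 H3]]]]. exists (inr c), (inr e). simpl; auto. }
  destruct j; simpl.
  - split; auto. split; auto. split; auto. split; auto. split; auto.
    intros [p|p] [q|q] [c|c] H Hr; simpl in *; try tauto.
    + destruct (L_diam1 U HU Ms N i q p c H Hr) as [d [H1 H2]]. exists (inr d). simpl; auto.
    + destruct (L_diam1 U HU Ns M i q p c H Hr) as [d [H1 H2]]. exists (inl d). simpl; auto.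
  - exists (Brel U Ns Ms i two). split; auto. split; [intros [p|p] [q|q]; simpl; tauto|].
    split; auto. split; auto. split; auto. split; auto. split.
    + intros [p|p] [q|q] [d|d] H Hr; simpl in *; try tauto.
      * destruct (L_d21 U HU Ns M i p q d H Hr) as [c [H1 H2]]. exists (inl c). simpl; auto.
      * destruct (L_d21 U HU Ms N i p q d H Hr) as [c [H1 H2]]. exists (inr c). simpl; auto.
    + intros [p|p] [q|q] [c|c] H Hr; simpl in *; try tauto.
      * destruct (L_d22 U HU Ms N i q p c H Hr) as [d [H1 H2]]. exists (inr d). simpl; auto.
      * destruct (L_d22 U HU Ns M i q p c H Hr) as [d [H1 H2]]. exists (inl d). simpl; auto.
Qed.

Lemma hard_dir U (HU : ultra U) i j x phi (Hfree : forall v, free_in v phi -> v = x) :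
  invariant i j x phi -> exists I, log_equiv phi (ST i j I x).
Proof.
  intro Hinv. apply NNPP; intro Hn.
  set (T := fun k => forall M (s : nat -> dom M), sat M s phi -> msat i j M (enum k) (s x)).
  assert (H1 : forall n, exists M (s : nat -> dom M), msat i j M (conjUp T n) (s x) /\ ~ sat M s phi).
  { intro n. apply NNPP; intro H. apply Hn. exists (conjUp T n). intros M s. rewrite ST_sat. split.
    - intro Hp. rewrite conjUp_sat. intros k _ Tk. apply Tk; auto.
    - intro Hc. apply NNPP; intro H'. apply H. exists M, s. auto. }
  destruct (choice_model _ H1) as [Ms [ss Hss]].
  pose (sM := (fun v n => ss n v) : nat -> dom (UP U Ms)).
  assert (HnM : ~ sat (UP U Ms) sM phi).
  { rewrite los by auto. intro H. apply (u0 _ HU). revert H. apply uS; auto.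
    intros n Hn'. apply (proj2 (Hss n)). exact Hn'. }
  assert (HT : forall I, (forall M (s : nat -> dom M), sat M s phi -> msat i j M I (s x)) ->
                 msat i j (UP U Ms) I (sM x)).
  { intros I HI. destruct (enum_surj I) as [k <-]. rewrite mlos by auto.
    apply (uS _ HU (fun n => k <= n)); [|apply ucof; auto]. intros n Hk.
    destruct (Hss n) as [Hc _]. rewrite conjUp_sat in Hc. apply Hc; auto. }
  pose (F := fun k => ~ msat i j (UP U Ms) (enum k) (sM x)).
  assert (H2 : forall n, exists N (t : nat -> dom N), sat N t phi /\ ~ msat i j N (disjUp F n) (t x)).
  { intro n. apply NNPP; intro H.
    assert (Hd : msat i j (UP U Ms) (disjUp F n) (sM x)).
    { apply HT. intros N t Ht. apply NNPP; intro H'. apply H. exists N, t. auto. }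
    rewrite disjUp_sat in Hd. destruct Hd as [k [_ [Fk Hk]]]. auto. }
  destruct (choice_model _ H2) as [Ns [ts Hts]].
  pose (tN := (fun v n => ts n v) : nat -> dom (UP U Ns)).
  assert (HpN : sat (UP U Ns) tN phi).
  { rewrite los by auto. apply (uS _ HU (fun _ => True)); [|apply uT; auto].
    intros n _. apply (proj1 (Hts n)). }
  assert (Hincl : incl i j (UP U Ns) (UP U Ms) (tN x) (sM x)).
  { intros I HI. destruct (enum_surj I) as [k <-]. apply NNPP; intro Fk.
    rewrite mlos in HI by auto. apply (u0 _ HU).
    apply (uS _ HU (fun n => k <= n /\ msat i j (Ns n) (enum k) (tN x n))).
    - intros n [Hk Hm]. destruct (Hts n) as [_ Hd]. apply Hd. rewrite disjUp_sat. exists k. auto.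
    - apply uI; auto. apply ucof; auto. }
  assert (Hh := Hinv (fun _ => True) (fun _ _ => Logic.I) (UP U Ns) (UP U Ms) (tN x) (sM x)
     (Arel U Ns Ms i j) (Arel_asim U HU Ns Ms i j _ _ _ Hincl) (tN x) (sM x) Hincl).
  apply HnM. apply Hh; [|reflexivity].
  intros s Hs. apply (sat_free _ phi s tN); auto. intros v Hv. rewrite (Hfree v Hv). auto.
Qed.
Module UE.
From mathcomp Require Import all_boot all_classical.
Lemma ex_ultra : exists U : (nat -> Prop) -> Prop,
  U (fun _ => True) /\
  (forall A B : nat -> Prop, U A -> U B -> U (fun n => A n /\ B n)) /\
  (forall A B : nat -> Prop, (forall n, A n -> B n) -> U A -> U B) /\
  ~ U (fun _ => False) /\
  (forall A : nat -> Prop, U A \/ U (fun n => ~ A n)) /\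
  (forall k, U (fun n => Peano.le k n)).
Proof.
have [G [GU sFG]] := ultraFilterLemma (eventually_filter : ProperFilter eventually).
exists G; split; [|split; [|split; [|split; [|split]]]].
- exact: (@filterT _ G).
- move=> A B HA HB; exact: (@filterI _ G _ A B HA HB).
- move=> A B AB HA; exact: (@filterS _ G _ A B AB HA).
- move=> H; apply: (@filter_not_empty _ G); by [].
- move=> A; exact: in_ultra_setVsetC.
- move=> k; apply: sFG; rewrite /eventually /filter_from /=; exists k => //= n /= Hn; by apply/leP.
Qed.
End UE.

Lemma ultra_exists : exists U, ultra U.
Proof.
  destruct UE.ex_ultra as [U [H1 [H2 [H3 [H4 [H5 H6]]]]]].
  exists U. constructor; auto.
Qed.

Theorem theorem2 (i j : idx) (x : nat) (phi : form)
  (Hfree : forall v, free_in v phi -> v = x) :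
  (exists I : mform, log_equiv phi (ST i j I x)) <-> invariant i j x phi.
Proof.
  split.
  - intros [I HI]. exact (easy_dir i j x phi I HI).
  - destruct ultra_exists as [U HU]. exact (hard_dir U HU i j x phi Hfree).
Qed.

Print Assumptions theorem2.
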